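(* Let $a<0$, $b<0$, $c>0$, $d<0$ with $a+bd>0$, consider $$Z_0=\begin{cases}X=(a,0,b(y+x^2)) & z\ge0,\\ Y=(c,d,x)& z\le0,\end{cases}$$ let $\Sigma^{c+}=\{(x,y,0)\,:\,x>0,\ y<-x^2\}$, $\Sigma^s=\{(x,y,0)\,:\,x>0,\ y>-x^2\}$, and let $\varphi$ be the first return map $$\varphi(x,y)=\left(\frac{ax-\sqrt{-3a^2(x^2+4y)}}{2a},\ y+\frac{d\big(ax-\sqrt{-3a^2(x^2+4y)}\big)}{ac}\right).$$ Given $p_0=(x_0,y_0,0)\in\overline{\Sigma^{c+}}\setminus\{0\}$, let $p_1=(x_1,y_1,0)=\varphi(p_0)$ and $p_n=(x_n,y_n,0)=\varphi^n(p_0)$ whenever defined (the map being iterated only while the iterates remain in $\overline{\Sigma^{c+}}$). Then $x_1>x_0$, and if $p_n$ is defined for all $n$ then $x_n\to\infty$ as $n\to\infty$.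
   Context: $\Sigma=\{z=0\}$. The first return map $\varphi$ sends a point $p$ of $\Sigma$ to the point obtained by following the trajectory of $X$ from $p$ until it returns to $\Sigma$, and then following the trajectory of $Y$ from there until it returns to $\Sigma$; it is not iterated on points of $\overline{\Sigma^s}$. For $x\ge0$, $y\le -x^2$ the formula gives $x_1=\frac{x_0+\sqrt{3}\sqrt{-(x_0^2+4y_0)}}{2}$. *)

(* Defs.v *)
From Stdlib Require Import Reals.
From Coquelicot Require Import Coquelicot.
Open Scope R_scope.

(* The first return map phi of Z_0, exactly as given in the paper
   (parameters a, c, d of the vector field). Points of Sigma={z=0}
   are represented by their (x,y) coordinates. *)
Definition phi (a c d : R) (p : R * R) : R * R :=
  let x := fst p in
  let y := snd p in
  let s := a * x - sqrt (- (3 * a ^ 2 * (x ^ 2 + 4 * y))) in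
  (s / (2 * a), y + d * s / (a * c)).

Definition in_cl_Sigma_cplus (p : R * R) : Prop :=
  0 <= fst p /\ snd p <= - (fst p) ^ 2.

Definition phi_iter (a c d : R) (n : nat) (p0 : R * R) : R * R :=
  Nat.iter n (phi a c d) p0.

(* Main.v *)
Require Import Defs.
From Stdlib Require Import Reals Lra Psatz.
From Coquelicot Require Import Coquelicot.
Open Scope R_scope.

Lemma key (a c d : R) (ha : a < 0) (p : R * R) (hp : in_cl_Sigma_cplus p) :
  fst (phi a c d p) >= 2 * fst p /\ (p <> (0,0) -> fst (phi a c d p) > fst p).
Proof.
  destruct p as [x y]; destruct hp as [hx hy]; simpl in hx, hy.
  unfold phi; cbn [fst snd].
  pose (Tq := - (3 * a ^ 2 * (x ^ 2 + 4 * y))). fold Tq.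
  assert (HT : (-3 * a * x) ^ 2 <= Tq) by (unfold Tq; nra).
  assert (Hs : -3 * a * x <= sqrt Tq).
  { rewrite <- (sqrt_pow2 (-3*a*x)) by nra. apply sqrt_le_1_alt; lra. }
  assert (E : (a * x - sqrt Tq) / (2 * a) = x/2 + sqrt Tq / (-2 * a)) by (field; lra).
  rewrite E.
  assert (H1 : sqrt Tq / (-2 * a) >= 3 * x / 2).
  { apply Rle_ge. apply (Rmult_le_reg_r (-2*a)); [lra|].
    replace (sqrt Tq / (-2 * a) * (-2 * a)) with (sqrt Tq) by (field; lra). nra. }
  split; [lra|].
  intros Hnz.
  destruct (Req_dec x 0) as [Hx0|Hx0]; [|lra].
  subst x.
  assert (y < 0).
  { destruct (Req_dec y 0); [subst; congruence|]. simpl in hy; lra. }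
  assert (HT0 : 0 < Tq) by (unfold Tq; assert (0 < a*a) by nra; simpl; nra).
  assert (0 < sqrt Tq) by (apply sqrt_lt_R0; lra).
  assert (0 < sqrt Tq / (-2 * a)) by (apply Rdiv_lt_0_compat; lra).
  lra.
Qed.

Theorem mainTheorem6 (a b c d : R)
  (ha : a < 0) (hb : b < 0) (hc : c > 0) (hd : d < 0) (habd : a + b * d > 0)
  (p0 : R * R) (hp0 : in_cl_Sigma_cplus p0) (hp0nz : p0 <> (0, 0)) :
  fst (phi a c d p0) > fst p0 /\
  ((forall n : nat, in_cl_Sigma_cplus (phi_iter a c d n p0)) ->
   is_lim_seq (fun n => fst (phi_iter a c d n p0)) p_infty).
Proof.
  destruct (key a c d ha p0 hp0) as [_ Hgt].
  split; [now apply Hgt|].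
  intros Hall.
  pose (u := fun n => fst (phi_iter a c d n p0)).
  pose (x1 := u 1%nat). fold u.
  assert (Hx0 : 0 <= u 0%nat) by (apply (Hall 0%nat)).
  assert (Hx1 : x1 > 0).
  { unfold x1, u; simpl. specialize (Hgt hp0nz). destruct hp0; simpl in *. lra. }
  assert (Hstep : forall n, u (S n) >= 2 * u n).
  { intro n. unfold u, phi_iter. simpl Nat.iter.
    exact (proj1 (key a c d ha _ (Hall n))). }
  assert (Hlin : forall n, u (S n) >= x1 * INR (S n)).
  { induction n.
    - simpl. unfold x1. lra.
    - specialize (Hstep (S n)). rewrite S_INR in *.
      assert (0 <= INR n) by apply pos_INR. rewrite S_INR. nra. }
  apply (is_lim_seq_le_p_loc (fun n => x1 * INR n)).
  - exists 0%nat. intros [|n] _.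
    + simpl. rewrite Rmult_0_r. exact Hx0.
    + apply Rge_le, Hlin.
  - eapply is_lim_seq_ext; [intro n; reflexivity|].
    assert (H := is_lim_seq_scal_l INR x1 p_infty is_lim_seq_INR).
    simpl in H. unfold Rbar_mult, Rbar_mult' in H.
    destruct (Rle_dec 0 x1) as [Hle|]; [|lra].
    destruct (Rle_lt_or_eq_dec 0 x1 Hle) as [_|]; [exact H|lra].
Qed.
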